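(* Let $(G,\cdot)$ be a WIPL with identity $e$, let $(H,\circ)$ be a WIPL with identity $e'$, and let $(A,B,C)$ be an isotopism from $(G,\cdot)$ to $(H,\circ)$. Put $a'=eA$ and $b'=eB$. Then $C$ is an isomorphism from $(G,\cdot)$ onto $(H,\circ)$ if and only if $(J_\rho' L_{b'}' J_\lambda',\ J_\lambda' R_{a'}' J_\rho',\ I)\in AUT(H,\circ)$. Moreover, when these equivalent conditions hold, $(J_\lambda' R_{a'}' J_\rho',\ J_\rho' L_{b'}' J_\lambda',\ R_{a'}'L_{b'}')\in AUT(H,\circ)$, and if in addition $y\circ y=e'$ for all $y\in H$, then $(R_{a'}',L_{b'}',R_{a'}'L_{b'}')\in AUT(H,\circ)$.
   Context: Maps are written on the right of their arguments ($xU$) and composed left to right: $UV$ means first apply $U$, then $V$; $I$ is the identity map. For a loop $(L,\cdot)$ with identity $e$, $x^\rho$ and $x^\lambda$ denote the right and left inverses of $x$ ($x x^\rho=e=x^\lambda x$), and $J_\rho:x\mapsto x^\rho$, $J_\lambda:x\mapsto x^\lambda$, $L_x:y\mapsto xy$, $R_x:y\mapsto yx$. For the loop $(H,\circ)$ with identity $e'$ the corresponding maps are denoted $J_\rho'$ ($y\mapsto y^{\rho'}$), $J_\lambda'$ ($y\mapsto y^{\lambda'}$), $L_y':z\mapsto y\circ z$, $R_y':z\mapsto z\circ y$. $L$ is a weak inverse property loop (WIPL) if $xy\cdot z=e$ implies $x\cdot yz=e$ for all $x,y,z\in L$. A triple $(U,V,W)$ of bijections $G\to H$ between loops $(G,\cdot)$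 and $(H,\circ)$ is an isotopism if $xU\circ yV=(x\cdot y)W$ for all $x,y\in G$; an autotopism is an isotopism of a loop to itself, and $AUT(H,\circ)$ denotes the group of autotopisms of $(H,\circ)$ under componentwise composition. *)

(* Defs.v *)
From Stdlib Require Import ClassicalEpsilon.
From mathcomp Require Import ssreflect ssrfun.
Set Implicit Arguments.
Unset Strict Implicit.

Definition is_loop (L : Type) (op : L -> L -> L) (e : L) : Prop :=
  (forall x, op e x = x /\ op x e = x) /\
  (forall a b, exists! x, op a x = b) /\
  (forall a b, exists! y, op y a = b).

Definition WIP (L : Type) (op : L -> L -> L) (e : L) : Prop :=
  forall x y z, op (op x y) z = e -> op x (op y z) = e.

Definition is_WIPL (L : Type) (op : L -> L -> L) (e : L) : Prop :=
  is_loop op e /\ WIP op e.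

(* right inverse x^rho : x * x^rho = e ; left inverse x^lambda : x^lambda * x = e *)
Definition rinv (L : Type) (op : L -> L -> L) (e : L) (x : L) : L :=
  epsilon (inhabits x) (fun y => op x y = e).
Definition linv (L : Type) (op : L -> L -> L) (e : L) (x : L) : L :=
  epsilon (inhabits x) (fun y => op y x = e).

Definition isotopism (G H : Type) (opG : G -> G -> G) (opH : H -> H -> H)
  (U V W : G -> H) : Prop :=
  bijective U /\ bijective V /\ bijective W /\
  (forall x y, opH (U x) (V y) = W (opG x y)).

Definition autotopism (H : Type) (op : H -> H -> H) (U V W : H -> H) : Prop :=
  isotopism op op U V W.

Definition isomorphism (G H : Type) (opG : G -> G -> G) (opH : H -> H -> H)
  (C : G -> H) : Prop :=
  bijective C /\ (forall x y, C (opG x y) = opH (C x) (C y)).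

(* Main.v *)
Require Import Defs.
From mathcomp Require Import ssreflect ssrfun.
From Stdlib Require Import ClassicalEpsilon.
Set Implicit Arguments.
Unset Strict Implicit.

Section Loop.
Variables (L : Type) (op : L -> L -> L) (e : L).
Hypothesis hL : is_WIPL op e.

Lemma lp_ide x : op e x = x. Proof. by case: hL => [[h _] _]; case: (h x). Qed.
Lemma lp_idr x : op x e = x. Proof. by case: hL => [[h _] _]; case: (h x). Qed.

Lemma lp_lcan a x y : op a x = op a y -> x = y.
Proof.
move=> h; case: hL => [[_ [hl _]] _]; case: (hl a (op a x)) => z [_ hz].
have h1 := hz x erefl; have h2 := hz y (esym h); congruence.
Qed.

Lemma lp_rcan a x y : op x a = op y a -> x = y.
Proof.
move=> h; case: hL => [[_ [_ hr]] _]; case: (hr a (op x a)) => z [_ hz].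
have h1 := hz x erefl; have h2 := hz y (esym h); congruence.
Qed.

Lemma lp_wip x y z : op (op x y) z = e -> op x (op y z) = e.
Proof. by case: hL => _ h; apply: h. Qed.

Lemma lp_wip' x y z : op x (op y z) = e -> op (op x y) z = e.
Proof.
move=> h; case: hL => [[_ [hl _]] _]; case: (hl (op x y) e) => w [hw _].
have h2 := lp_wip hw.
have : op y w = op y z by apply: (@lp_lcan x); rewrite h2 h.
by move/lp_lcan => <-.
Qed.

Lemma lp_rdiv a b : exists y, op y a = b.
Proof. by case: hL => [[_ [_ hr]] _]; case: (hr a b) => y [h _]; exists y. Qed.
Lemma lp_ldiv a b : exists y, op a y = b.
Proof. by case: hL => [[_ [hl _]] _]; case: (hl a b) => y [h _]; exists y. Qed.

Lemma rinv_spec x : op x (rinv op e x) = e.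
Proof. exact: (epsilon_spec (inhabits x) (fun y => op x y = e) (lp_ldiv x e)). Qed.
Lemma linv_spec x : op (linv op e x) x = e.
Proof. exact: (epsilon_spec (inhabits x) (fun y => op y x = e) (lp_rdiv x e)). Qed.

Lemma Lspec b y : op (linv op e (op b (rinv op e y))) b = y.
Proof.
have h := lp_wip' (linv_spec (op b (rinv op e y))).
apply: (@lp_rcan (rinv op e y)); by rewrite h rinv_spec.
Qed.

Lemma Rspec a y : op a (rinv op e (op (linv op e y) a)) = y.
Proof.
have h := lp_wip (rinv_spec (op (linv op e y) a)).
apply: (@lp_lcan (linv op e y)); by rewrite h linv_spec.
Qed.

Section Core.
Variables (U V : L -> L) (a b : L).
Hypothesis hU : forall y, op (U y) b = y.
Hypothesis hV : forall y, op a (V y) = y.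

Lemma Uinv y : U (op y b) = y.
Proof. by apply: (@lp_rcan b); rewrite hU. Qed.
Lemma Vinv y : V (op a y) = y.
Proof. by apply: (@lp_lcan a); rewrite hV. Qed.

Hypothesis hUV : forall x y, op (U x) (V y) = op x y.

Lemma Ub : U b = e. Proof. by apply: (@lp_rcan b); rewrite hU lp_ide. Qed.
Lemma Va : V a = e. Proof. by apply: (@lp_lcan a); rewrite hV lp_idr. Qed.
Lemma ba : op b a = e.
Proof. by rewrite -hUV Ub Va lp_ide. Qed.

Lemma Vl q w : op (V q) w = V (op q w).
Proof.
case: (lp_rdiv (op q w) e) => p hp.
have h1 := lp_wip' hp; rewrite -(hUV p q) in h1; have h2 := lp_wip h1.
have h3 : op p (op a (V (op q w))) = e by rewrite hV.
have h4 := lp_wip' h3.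
have hpa : op p a = U p by rewrite -hUV Va lp_idr.
rewrite hpa in h4.
by apply: (@lp_lcan (U p)); rewrite h2 h4.
Qed.

Lemma Ur x y : op x (U y) = U (op x y).
Proof.
case: (lp_ldiv (op x y) e) => p hp.
have h1 := lp_wip hp; rewrite -(hUV y p) in h1; have h2 := lp_wip' h1.
have h3 : op (op (U (op x y)) b) p = e by rewrite hU.
have h4 := lp_wip h3.
have hbp : op b p = V p by rewrite -hUV Ub lp_ide.
rewrite hbp in h4.
by apply: (@lp_rcan (V p)); rewrite h2 h4.
Qed.

Lemma Ve : V e = b.
Proof. apply: (@lp_rcan a); by rewrite Vl lp_ide Va ba. Qed.
Lemma Ue : U e = a.
Proof. apply: (@lp_lcan b); by rewrite Ur lp_idr Ub ba. Qed.
Lemma VE z : V z = op b z.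
Proof. by rewrite -Ve Vl lp_ide. Qed.
Lemma UE z : U z = op z a.
Proof. by rewrite -Ue Ur lp_idr. Qed.

Lemma core2 : autotopism op V U (fun y => op b (op y a)).
Proof.
split; first by exists (fun y => op a y) => x; [apply: hV | apply: Vinv].
split; first by exists (fun y => op y b) => x; [apply: hU | apply: Uinv].
split.
  exists (fun y => op (op a y) b) => x.
    by rewrite -(UE x) -(VE (U x)) hV hU.
  by rewrite -(UE (op (op a x) b)) Uinv -(VE (op a x)) Vinv.
by move=> x y; rewrite Vl Ur VE UE.
Qed.

Lemma core3 : (forall y, op y y = e) ->
  autotopism op (fun y => op y a) (fun y => op b y) (fun y => op b (op y a)).
Proof.
move=> hsq.
have eab : b = a by apply: (@lp_rcan a); rewrite ba hsq.
split; first by exists (fun y => op y b) => x;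
  [rewrite -(UE x) hU | rewrite -(UE (op x b)) Uinv].
split; first by exists (fun y => op a y) => x;
  [rewrite -(VE x) hV | rewrite -(VE (op a x)) Vinv].
split; first by case: core2 => _ [_ [h _]].
move=> x y; rewrite -(UE x) -(VE y) hUV eab.
set z := op x y.
have h1 : op (op z a) (op z a) = e by rewrite hsq.
have h2 := lp_wip h1.
by apply: (@lp_lcan z); rewrite h2 hsq.
Qed.

End Core.
End Loop.

(* Maps are composed left to right in the paper: "U V" = first U then V,
   i.e. the Rocq function (fun y => V (U y)). *)
Theorem mainTheorem3 (G H : Type) (opG : G -> G -> G) (e : G)
  (opH : H -> H -> H) (e' : H) (A B C : G -> H) :
  is_WIPL opG e -> is_WIPL opH e' ->
  isotopism opG opH A B C ->
  let a' := A e in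
  let b' := B e in
  let Jr := rinv opH e' in
  let Jl := linv opH e' in
  (isomorphism opG opH C <->
     autotopism opH (fun y => Jl (opH b' (Jr y)))
                    (fun y => Jr (opH (Jl y) a'))
                    (fun y => y)) /\
  (isomorphism opG opH C ->
     autotopism opH (fun y => Jr (opH (Jl y) a'))
                    (fun y => Jl (opH b' (Jr y)))
                    (fun y => opH b' (opH y a')) /\
     ((forall y, opH y y = e') ->
        autotopism opH (fun y => opH y a') (fun y => opH b' y)
                       (fun y => opH b' (opH y a')))).
Proof.
move=> hG hH [bA [bB [bC iso]]] a' b' Jr Jl.
have hU : forall y, opH (Jl (opH b' (Jr y))) b' = y by move=> y; apply: Lspec.
have hV : forall y, opH a' (Jr (opH (Jl y) a')) = y by move=> y; apply: Rspec.
have hAe : forall x, opH (A x) b' = C x by move=> x; rewrite /b' iso lp_idr.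
have hBe : forall x, opH a' (B x) = C x by move=> x; rewrite /a' iso lp_ide.
have UC : forall p, Jl (opH b' (Jr (C p))) = A p.
  by move=> p; apply: (@lp_rcan _ _ _ hH b'); rewrite hU hAe.
have VC : forall p, Jr (opH (Jl (C p)) a') = B p.
  by move=> p; apply: (@lp_lcan _ _ _ hH a'); rewrite hV hBe.
have fwd : isomorphism opG opH C ->
     autotopism opH (fun y => Jl (opH b' (Jr y)))
                    (fun y => Jr (opH (Jl y) a'))
                    (fun y => y).
  case=> _ isoC.
  split; first by exists (fun y => opH y b') => x;
    [apply: hU | apply: (Uinv hH hU)].
  split; first by exists (fun y => opH a' y) => x;
    [apply: hV | apply: (Vinv hH hV)].
  split; first by exists (fun y => y).
  move=> x y /=; case: bC => g _ gK.
  by rewrite -[x in LHS]gK -[y in LHS]gK UC VC iso isoC !gK.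
split.
  split; first exact: fwd.
  case=> _ [_ [_ h]]; split; first done.
  by move=> p q; rewrite -iso -UC -VC h.
move=> /fwd [_ [_ [_ h]]].
have hUV : forall x y, opH (Jl (opH b' (Jr x))) (Jr (opH (Jl y) a')) = opH x y
  by move=> x y; rewrite h.
split; first exact: (core2 hH hU hV hUV).
exact: (core3 hH hU hV hUV).
Qed.
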